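(* Let $R$ be a real $n\times n$ payoff matrix, let $S,F$ be $n\times n$ row-stochastic matrices, and for $\lambda\in[0,1]$ set $Q(\lambda)=(1-\lambda)S+\lambda F$, $R(\lambda)=Q(\lambda)RQ(\lambda)^T$ and $\tilde R(\lambda)=R(\lambda)-\mathbf d_{R(\lambda)}\mathbf u^T$, where $\mathbf d_{R(\lambda)}$ is the column vector of diagonal entries of $R(\lambda)$ and $\mathbf u$ is the all-ones column vector. Consider the replicator dynamics on the simplex $S^n=\{x\in\mathbb R^n: x_i\ge 0,\ \sum_i x_i=1\}$, $$\dot x_i=x_i\big((\tilde R(\lambda)x)_i-x^T\tilde R(\lambda)x\big),\quad i=1,\dots,n.$$ Let $i\neq j$ and suppose that, for $\lambda$ near a value $\lambda^c$, $\tilde{\mathbf x}=\alpha\mathbf e_i+(1-\alpha)\mathbf e_j$ with $\alpha\in(0,1)$ is a fixed point of these dynamics which is stable (all eigenvalues of the Jacobian at $\tilde{\mathbf x}$ have negative real parts) for $\lambda$ on one side of $\lambda^c$. Suppose that for some $k\neq i,j$ the function $$\phi_k(\lambda)=\mathbf e_k^T\tilde R(\lambda)\tilde{\mathbf x}-\tilde{\mathbf x}^T\tilde R(\lambda)\tilde{\mathbf x}$$ changes sign from $<0$ to $>0$ at $\lambda^c$. Then $\tilde{\mathbf x}$ changes its qualitative behavior at $\lambda^c$ and becomes unstable (after $\lambda$ crosses $\lambda^c$).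
   Context: $\mathbf e_1,\dots,\mathbf e_n$ denote the standard unit basis vectors of $\mathbb R^n$. $Q(\lambda)$ is the incompetence matrix: its $(i,j)$ entry is the probability that strategy $j$ is executed when strategy $i$ is selected; $\lambda$ is the incompetence (training) parameter. *)

(* Defs.v *)
From HB Require Import structures.
From mathcomp Require Import all_boot all_order all_algebra.
From mathcomp Require Import all_classical all_reals.
From mathcomp Require Import topology normedtype derive.
From mathcomp Require Import complex.
Import Order.TTheory GRing.Theory Num.Theory.
Import numFieldNormedType.Exports.

Set Implicit Arguments.
Unset Strict Implicit.
Unset Printing Implicit Defensive.

Local Open Scope ring_scope.

Section Defs.
Variables (R : realType) (n : nat).

Definition row_stochastic (S : 'M[R]_n) : Prop :=
  (forall a b, 0 <= S a b) /\ (forall a, \sum_b S a b = 1).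

Definition Qlam (S F : 'M[R]_n) (l : R) : 'M[R]_n := (1 - l) *: S + l *: F.

Definition Rlam (Rm S F : 'M[R]_n) (l : R) : 'M[R]_n :=
  Qlam S F l *m Rm *m (Qlam S F l)^T.

Definition Rtilde (Rm S F : 'M[R]_n) (l : R) : 'M[R]_n :=
  Rlam Rm S F l - \matrix_(a, b) Rlam Rm S F l a a.

(* points of R^n are represented as row vectors 'rV[R]_n;
   (A x)_a = (x *m A^T) 0 a and x^T A x = (x *m A^T *m x^T) 0 0 *)
Definition Ax (A : 'M[R]_n) (x : 'rV[R]_n) (a : 'I_n) : R := (x *m A^T) 0 a.
Definition xAx (A : 'M[R]_n) (x : 'rV[R]_n) : R := (x *m A^T *m x^T) 0 0.

Definition replicator (A : 'M[R]_n) (x : 'rV[R]_n) : 'rV[R]_n :=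
  \row_a (x 0 a * (Ax A x a - xAx A x)).

Definition evec (a : 'I_n) : 'rV[R]_n := delta_mx 0 a.

(* Jacobian of the vector field f at x (mathcomp-analysis 'J, which acts on
   row vectors, i.e. it is the transpose of the usual Jacobian; it has the
   same eigenvalues), viewed as a complex matrix *)
Definition jacC (f : 'rV[R]_n -> 'rV[R]_n) (x : 'rV[R]_n) : 'M[complex.complex R]_n :=
  map_mx (complex.real_complex R) (jacobian f x).

Definition stable_fp (f : 'rV[R]_n -> 'rV[R]_n) (x : 'rV[R]_n) : Prop :=
  forall z : complex.complex R, eigenvalue (jacC f x) z -> complex.Re z < 0.

Definition unstable_fp (f : 'rV[R]_n -> 'rV[R]_n) (x : 'rV[R]_n) : Prop :=
  exists z : complex.complex R, eigenvalue (jacC f x) z /\ 0 < complex.Re z.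

Definition phi (A : 'M[R]_n) (k : 'I_n) (x : 'rV[R]_n) : R :=
  Ax A x k - xAx A x.

End Defs.
Arguments evec {R n}.

(* Main.v *)
Require Import Defs.
From HB Require Import structures.
From mathcomp Require Import all_boot all_order all_algebra.
From mathcomp Require Import all_classical all_reals.
From mathcomp Require Import topology normedtype derive.
From mathcomp Require Import complex.
Import Order.TTheory GRing.Theory Num.Theory.
Import numFieldNormedType.Exports.
Local Open Scope ring_scope.

Section H.
Variables (R : realType) (n : nat).
Local Notation V := ('rV[R]_n).

Lemma diff_sumf (F : 'I_n -> V -> R) x :
  (forall b, differentiable (F b) x) -> differentiable (fun y => \sum_b F b y) x.
Proof.
move=> H; rewrite -(fct_sumE (index_enum _) _ F).
exact: differentiable_sum.
Qed.

Lemma diff_coordf (k : 'I_n) (x : V) : differentiable (fun y : V => y 0 k) x.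
Proof. exact: differentiable_coord. Qed.

Lemma d_coordf (k : 'I_n) (x v : V) : 'd (fun y : V => y 0 k) x v = v 0 k.
Proof.
have @f : {linear V -> R^o}.
  by exists (fun N : V => N 0 k); do 2![eexists]; do ?[constructor];
     rewrite ?mxE// => ? *; rewrite ?mxE//; move=> ?; rewrite !mxE.
rewrite (_ : (fun _ => _) = f) // diff_lin //; exact: coord_continuous.
Qed.

Lemma diff_Ax (A : 'M[R]_n) a (x : V) : differentiable (fun y => Ax A y a) x.
Proof.
rewrite (_ : (fun y => Ax A y a) = fun y => \sum_b (fun y : V => A a b * y 0 b) y).
  apply: diff_sumf => b.
  exact: (differentiableZ (f := fun y : V => y 0 b : R^o)) (diff_coordf b x).
apply/funext => y; rewrite /Ax !mxE; apply: eq_bigr => b _.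
by rewrite mxE mulrC.
Qed.
Lemma diff_xAx (A : 'M[R]_n) (x : V) : differentiable (fun y => xAx A y) x.
Proof.
rewrite (_ : (fun y => xAx A y) = fun y => \sum_b (fun y : V => Ax A y b * y 0 b) y).
  apply: diff_sumf => b.
  exact: (differentiableM (diff_Ax A b x) (diff_coordf b x)).
apply/funext => y; rewrite /xAx /Ax !mxE; apply: eq_bigr => b _.
by rewrite !mxE.
Qed.

Definition gfun (A : 'M[R]_n) (a : 'I_n) (y : V) : R := y 0 a * (Ax A y a - xAx A y).

Lemma diff_gfun (A : 'M[R]_n) a (x : V) : differentiable (gfun A a) x.
Proof.
apply: (differentiableM (diff_coordf a x)).
exact: (differentiableB (diff_Ax A a x) (diff_xAx A x)).
Qed.

Lemma diff_rep (A : 'M[R]_n) (x : V) : differentiable (replicator A) x.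
Proof.
rewrite (_ : replicator A = \sum_a (fun y => gfun A a y *: (evec a : V))).
  apply: differentiable_sum => a; exact: differentiableZl (diff_gfun A a x).
apply/funext => y; rewrite fct_sumE [LHS]row_sum_delta; apply: eq_bigr => a _.
by rewrite mxE.
Qed.

Lemma d_rep_k (A : 'M[R]_n) k (x v : V) : x 0 k = 0 ->
  ('d (replicator A) x v) 0 k = phi A k x * v 0 k.
Proof.
move=> xk.
transitivity (('d (fun y : V => y 0 k) (replicator A x) \o 'd (replicator A) x) v).
  by rewrite /= d_coordf.
rewrite -diff_comp; [|exact: diff_rep|exact: diff_coordf].
rewrite (_ : _ \o _ = gfun A k); last by apply/funext => y; rewrite /= mxE.
rewrite /gfun.
rewrite (diffM (diff_coordf k x) (differentiableB (diff_Ax A k x) (diff_xAx A x))).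
rewrite /= xk !fctE; rewrite [X in X + _](_ : _ = 0); last by rewrite /GRing.scale /=; exact: mul0r.
  rewrite add0r /GRing.scale /=; rewrite /phi -(d_coordf k x v); done.
Qed.
Lemma eig_tr (F : fieldType) m (M : 'M[F]_m) a : eigenvalue M^T a -> eigenvalue M a.
Proof.
rewrite !eigenvalue_root_char /char_poly.
have -> : char_poly_mx M^T = (char_poly_mx M)^T.
  by rewrite /char_poly_mx linearB /= tr_scalar_mx map_trmx.
by rewrite det_tr.
Qed.
End H.

Theorem lemma1 (R : realType) (n : nat) (Rm S F : 'M[R]_n)
  (i j k : 'I_n) (alpha lc delta : R) :
  row_stochastic S -> row_stochastic F ->
  i != j -> k != i -> k != j ->
  0 < alpha < 1 ->
  0 < delta ->
  let xt := alpha *: evec i + (1 - alpha) *: evec j in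
  (* xt is a fixed point for all lambda in [0,1] near lc *)
  (forall l, 0 <= l <= 1 -> lc - delta < l < lc + delta ->
     replicator (Rtilde Rm S F l) xt = 0) ->
  (* xt is stable for lambda on one side (below) of lc *)
  (forall l, 0 <= l <= 1 -> lc - delta < l < lc ->
     stable_fp (replicator (Rtilde Rm S F l)) xt) ->
  (* phi_k changes sign from < 0 to > 0 at lc *)
  (forall l, 0 <= l <= 1 -> lc - delta < l < lc ->
     phi (Rtilde Rm S F l) k xt < 0) ->
  (forall l, 0 <= l <= 1 -> lc < l < lc + delta ->
     0 < phi (Rtilde Rm S F l) k xt) ->
  (* conclusion: xt is unstable after lambda crosses lc *)
  forall l, 0 <= l <= 1 -> lc < l < lc + delta ->
    unstable_fp (replicator (Rtilde Rm S F l)) xt.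
Proof.
move=> _ _ ij ki kj _ _ xt _ _ _ Hpos l l01 ll.
have ph := Hpos l l01 ll.
set A := Rtilde Rm S F l in ph *.
have xk : xt 0 k = 0.
  by rewrite /xt /evec !mxE (negbTE ki) (negbTE kj) /= !mulr0 addr0.
exists ((phi A k xt)%:C)%C; split; last by [].
apply: eig_tr; apply/eigenvalueP; exists (delta_mx 0 k); last first.
  by apply/negP => /eqP/matrixP/(_ 0 k); rewrite !mxE !eqxx /= => /eqP; rewrite oner_eq0.
rewrite -rowE; apply/rowP => b; rewrite !mxE /jacobian.
rewrite d_rep_k // !mxE eqxx /= eq_sym; case: (b == k) => /=.
  by rewrite mulr1 mulr1.
by rewrite !mulr0.
Qed.
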